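(* Let $A,B,C$ be subspaces. If $A\perp^{*}B$ and $A\cap B\subsetneq C\subset B$, then $A\perp^{*}C$.
   Context: Let $V$ be a vector space over a field with a nondegenerate symmetric bilinear form $\xi$ having no isotropic vectors. (Affine) subspaces are sets $p+W$ with $W$ a linear subspace. $X_1\sqcup X_2$ denotes the least subspace containing $X_1\cup X_2$. For nonempty subspaces $X,Y$: $X\perp Y$ iff $\xi(b-a,d-c)=0$ for all $a,b\in X$, $c,d\in Y$; $X\perp_x Y$ iff $X\perp Y$ and $X\cap Y\neq\emptyset$. $X_1\perp^{\circ}X_2$ iff there are a point $q\in X_1\cap X_2$ and subspaces $Z_1,Z_2$ with $q\in Z_1,Z_2$, $Z_i\perp_x X_1\cap X_2$, $Z_1\perp_x Z_2$, and $(X_1\cap X_2)\sqcup Z_i=X_i$ for $i=1,2$. $X_1\perp^{*}X_2$ iff $X_1\perp^{\circ}X_2$ and $X_1\cap X_2$ is different from both $X_1$ and $X_2$. *)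

(* Defs.v *)
From mathcomp Require Import all_boot all_algebra.
Set Implicit Arguments. Unset Strict Implicit. Unset Printing Implicit Defensive.
Import GRing.Theory.
Local Open Scope ring_scope.

Section AffineOrtho.
Variables (K : fieldType) (V : lmodType K) (xi : V -> V -> K).

Definition anisotropic_sym_bilinear : Prop :=
  [/\ (forall a u v w, xi (a *: u + v) w = a * xi u w + xi v w),
      (forall u v, xi u v = xi v u),
      (forall u, (forall v, xi u v = 0) -> u = 0)
    & (forall v, xi v v = 0 -> v = 0)].

Definition lin_subspace (W : V -> Prop) : Prop :=
  [/\ W 0, (forall u v, W u -> W v -> W (u + v))
    & (forall (a : K) u, W u -> W (a *: u))].

(* affine subspace p + W (in particular nonempty) *)
Definition aff_subspace (X : V -> Prop) : Prop :=
  exists p W, lin_subspace W /\ forall x, X x <-> W (x - p).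

Definition set_eq (X Y : V -> Prop) : Prop := forall x, X x <-> Y x.
Definition psubset (X Y : V -> Prop) : Prop := forall x, X x -> Y x.
Definition psetI (X Y : V -> Prop) : V -> Prop := fun x => X x /\ Y x.

Definition join (X1 X2 : V -> Prop) : V -> Prop :=
  fun x => forall Y, aff_subspace Y -> psubset X1 Y -> psubset X2 Y -> Y x.

Definition perp (X Y : V -> Prop) : Prop :=
  forall a b c d, X a -> X b -> Y c -> Y d -> xi (b - a) (d - c) = 0.

Definition perp_x (X Y : V -> Prop) : Prop :=
  perp X Y /\ exists x, X x /\ Y x.

Definition perp_circ (X1 X2 : V -> Prop) : Prop :=
  exists q Z1 Z2,
    [/\ X1 q /\ X2 q, aff_subspace Z1 /\ aff_subspace Z2, Z1 q /\ Z2 q,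
        (perp_x Z1 (psetI X1 X2) /\ perp_x Z2 (psetI X1 X2)) /\ perp_x Z1 Z2
      & set_eq (join (psetI X1 X2) Z1) X1 /\ set_eq (join (psetI X1 X2) Z2) X2].

Definition perp_star (X1 X2 : V -> Prop) : Prop :=
  [/\ perp_circ X1 X2, ~ set_eq (psetI X1 X2) X1 & ~ set_eq (psetI X1 X2) X2].

End AffineOrtho.

(* Main.v *)
Require Import Defs.
From mathcomp Require Import all_boot all_algebra.
From Stdlib Require Import Setoid.

Set Implicit Arguments. Unset Strict Implicit. Unset Printing Implicit Defensive.
Import GRing.Theory.
Local Open Scope ring_scope.

Section Aux.
Variables (K : fieldType) (V : lmodType K).

Lemma lin_opp (W : V -> Prop) u : lin_subspace W -> W u -> W (- u).
Proof. by case=> _ _ hs hu; rewrite -scaleN1r; apply: hs. Qed.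

Lemma lin_sub (W : V -> Prop) u v : lin_subspace W -> W u -> W v -> W (u - v).
Proof. move=> hW hu hv; case: (hW) => _ ha _; apply: ha => //; exact: lin_opp. Qed.

Lemma aff_at (X : V -> Prop) q : aff_subspace X -> X q ->
  exists W, lin_subspace W /\ forall x, X x <-> W (x - q).
Proof.
case=> p [W [hW hX]] Xq; exists W; split => // x; rewrite hX.
have Wq : W (q - p) by rewrite -hX.
case: (hW) => _ ha _.
split => h.
- have -> : x - q = (x - p) - (q - p) by rewrite opprB addrA subrK.
  exact: lin_sub.
- have -> : x - p = (x - q) + (q - p) by rewrite addrA subrK.
  exact: ha.
Qed.

Lemma affI (X Y : V -> Prop) q : aff_subspace X -> aff_subspace Y -> X q -> Y q ->
  aff_subspace (psetI X Y).
Proof.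
move=> aX aY Xq Yq.
have [W1 [h1 e1]] := aff_at aX Xq; have [W2 [h2 e2]] := aff_at aY Yq.
exists q, (fun v => W1 v /\ W2 v); split.
  case: h1 => a1 b1 c1; case: h2 => a2 b2 c2.
  split; first by [].
    by move=> u v [? ?] [? ?]; split; [apply: b1|apply: b2].
  by move=> a u [? ?]; split; [apply: c1|apply: c2].
by move=> x; rewrite /psetI e1 e2.
Qed.

Lemma join_ext (X X' Z : V -> Prop) :
  set_eq X X' -> set_eq (join X Z) (join X' Z).
Proof.
move=> e x; split=> h Y aY s1 s2; apply: h => // y hy; apply: s1; case: (e y) => f g; auto.
Qed.

Lemma join_dec (D Z : V -> Prop) q WD WZ :
  lin_subspace WD -> lin_subspace WZ ->
  (forall x, D x <-> WD (x - q)) -> (forall x, Z x <-> WZ (x - q)) ->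
  forall x, join D Z x -> exists d z, [/\ WD d, WZ z & x = q + d + z].
Proof.
move=> hD hZ eD eZ x hj.
pose Y := fun x => exists d z, [/\ WD d, WZ z & x = q + d + z].
apply: (hj Y).
- exists q, (fun v => exists d z, [/\ WD d, WZ z & v = d + z]); split.
    case: (hD) => a1 b1 c1; case: (hZ) => a2 b2 c2.
    split.
    + by exists 0, 0; rewrite addr0.
    + move=> u v [d [z [? ? ->]]] [d' [z' [? ? ->]]].
      exists (d + d'), (z + z'); split; [exact: b1|exact: b2|].
      by rewrite addrACA.
    + move=> a u [d [z [? ? ->]]]; exists (a *: d), (a *: z); split;
        [exact: c1|exact: c2|by rewrite scalerDr].
  move=> y; split.
    by move=> [d [z [? ? ->]]]; exists d, z; split => //; rewrite -[q + d + z]addrA [q + _ - q]addrC addKr.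
  move=> [d [z [? ? e]]]; exists d, z; split => //.
  by rewrite -addrA -e addrC subrK.
- move=> y /eD hy; exists (y - q), 0; split => //; first by case: hZ.
  by rewrite addr0 addrC subrK.
- move=> y /eZ hy; exists 0, (y - q); split => //; first by case: hD.
  by rewrite addr0 addrC subrK.
Qed.

End Aux.

Theorem proposition3p3 (K : fieldType) (V : lmodType K) (xi : V -> V -> K)
  (hxi : anisotropic_sym_bilinear xi) (A B C : V -> Prop) :
  aff_subspace A -> aff_subspace B -> aff_subspace C ->
  perp_star xi A B ->
  psubset (psetI A B) C -> ~ psubset C (psetI A B) -> psubset C B ->
  perp_star xi A C.
Proof.
move=> aA aB aC [[q [Z1 [Z2 [[Aq Bq] [aZ1 aZ2] [Z1q Z2q] [[pZ1 pZ2] p12] [j1 j2]]]]] nA nB].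
move=> hDC hCD hCB.
have Cq : C q by apply: hDC.
have eAC : set_eq (psetI A C) (psetI A B).
  by move=> x; split=> [[? ?]|[? ?]]; split => //; [apply: hCB|apply: hDC].
have aD : aff_subspace (psetI A B) by apply: (affI aA aB Aq Bq).
have [WD [hWD eD]] := aff_at aD (conj Aq Bq).
have [WZ [hWZ eZ]] := aff_at aZ2 Z2q.
have [WC [hWC eC]] := aff_at aC Cq.
split.
- exists q, Z1, (psetI C Z2); split.
  + by [].
  + by split => //; apply: (affI aC aZ2 Cq Z2q).
  + by [].
  + split; first split.
    * case: pZ1 => pp _; split; last by exists q.
      by move=> a b c d ha hb /eAC hc /eAC hd; apply: pp.
    * case: pZ2 => pp _; split; last by exists q.
      by move=> a b c d [_ ha] [_ hb] /eAC hc /eAC hd; apply: pp.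
    * case: p12 => pp _; split; last by exists q.
      by move=> a b c d ha hb [_ hc] [_ hd]; apply: pp.
  + split.
      move=> x; rewrite (join_ext _ eAC); exact: j1.
    move=> x; rewrite (join_ext _ eAC); split.
      by move=> h; apply: h => // y [].
    move=> Cx.
    have /j2 hj : B x by apply: hCB.
    have [d [z [Wd Wz ex]]] := join_dec hWD hWZ eD eZ hj.
    have Dd : psetI A B (q + d) by apply/eD; rewrite addrC addKr.
    have Zz : Z2 (q + z) by apply/eZ; rewrite addrC addKr.
    have WCd : WC d by have := hDC _ Dd; rewrite eC addrC addKr.
    have WCx : WC (d + z) by have := Cx; rewrite eC ex -[q + d + z]addrA [q + _ - q]addrC addKr.
    have WCz : WC z.
      have -> : z = (d + z) - d by rewrite addrC addKr.
      exact: lin_sub.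
    have Cz : C (q + z) by apply/eC; rewrite addrC addKr.
    move=> Y aY s1 s2.
    have Yq : Y q by apply: s1.
    have [WY [hWY eY]] := aff_at aY Yq.
    have Yd : WY d by have := s1 _ Dd; rewrite eY addrC addKr.
    have Yz : WY z by have := s2 _ (conj Cz Zz); rewrite eY addrC addKr.
    apply/eY; rewrite ex -[q + d + z]addrA [q + _ - q]addrC addKr.
    by case: hWY => _ ha _; apply: ha.
- move=> e; apply: nA => x; rewrite -eAC; exact: e.
- move=> e; apply: hCD => x Cx; apply/(eAC x); by apply/(e x).
Qed.
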